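(* Let $2\le k\le n$ be integers, $V=[n]$, and $\mathbf{d}\in\mathbb{Z}^n$. (a) For $a,b\in V$, if $\mathbf{d}-\mathbf{e}_a$ and $\mathbf{d}-\mathbf{e}_b$ are $k$-graphical, then $$R_{ab}(\mathbf{d})=\frac{d_a}{d_b}\cdot\frac{1-B(a,b,\mathbf{d}-\mathbf{e}_b)}{1-B(b,a,\mathbf{d}-\mathbf{e}_a)},$$ provided that $B(b,a,\mathbf{d}-\mathbf{e}_a)<1$, where for $i,j\in\{a,b\}$ and a sequence $\mathbf{d}'$, $$B(i,j,\mathbf{d}')=\frac{1}{d_i}\left(\sum_{K\in\binom{V\setminus\{a,b\}}{k-2}}P_{K\cup\{i,j\}}(\mathbf{d}')+\sum_{K\in\binom{V\setminus\{a,b\}}{k-1}}Y_{i,K,j}(\mathbf{d}')\right).$$ (b) Let $A\in\binom{V}{k-1}$ and $v\in V\setminus A$. Then $$P_{A\cup\{v\}}(\mathbf{d})=d_v\left(\sum_{B\in\binom{V\setminus\{v\}}{k-1}}R_{B,A}(\mathbf{d}-\mathbf{e}_v)\,\frac{1-P_{B\cup\{v\}}(\mathbf{d}-\mathbf{e}_{B\cup\{v\}})}{1-P_{A\cup\{v\}}(\mathbf{d}-\mathbf{e}_{A\cup\{v\}})}\right)^{-1},$$ provided that $P_{A\cup\{v\}}(\mathbf{d})>0$ and, for every $B\in\binom{V\setminus\{v\}}{k-1}$ with $A$-consistent ordering $(a_1,\dots,a_{k-1})$, $(b_1,\dots,b_{k-1})$ of $(A,B)$, the sequences $\mathbf{d}-\mathbf{e}_v-\mathbf{e}_{\{b_1,\dots,b_j,a_{j+1},\dots,a_{k-1}\}}$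 are $k$-graphical for all $j\in\{0,1,\dots,k-1\}$. (c) For $K\in\binom{V}{k-1}$ and distinct $a,b\in V\setminus K$, if $P_{K\cup\{a\}}(\mathbf{d}-\mathbf{e}_{K\cup\{a\}})<1$, then $$Y_{a,K,b}(\mathbf{d})=\frac{P_{K\cup\{a\}}(\mathbf{d})}{1-P_{K\cup\{a\}}(\mathbf{d}-\mathbf{e}_{K\cup\{a\}})}\left(P_{K\cup\{b\}}(\mathbf{d}-\mathbf{e}_{K\cup\{a\}})-Y_{a,K,b}(\mathbf{d}-\mathbf{e}_{K\cup\{a\}})\right).$$
   Context: A $k$-graph on $V=[n]$ is a set of $k$-element subsets of $V$. $\mathcal{N}(\mathbf{d})$ is the number of $k$-graphs on $V$ with degree sequence $\mathbf{d}$; $\mathbf{d}$ is $k$-graphical if $\mathcal{N}(\mathbf{d})>0$. $\mathbf{e}_a$ is the $a$-th standard basis vector and $\mathbf{e}_S=\sum_{a\in S}\mathbf{e}_a$ for $S\subseteq V$. For $a,b\in V$ with $\mathcal{N}(\mathbf{d}-\mathbf{e}_b)>0$, $R_{ab}(\mathbf{d})=\mathcal{N}(\mathbf{d}-\mathbf{e}_a)/\mathcal{N}(\mathbf{d}-\mathbf{e}_b)$. For $k$-graphical $\mathbf{d}$ and $S\subseteq V$, $P_S(\mathbf{d})$ is the probability that a uniformly random $k$-graph with degree sequence $\mathbf{d}$ contains $S$ as an edge (so $P_S=0$ if $|S|\ne k$); for $K\in\binom V{k-1}$, $a,b\in V\setminus K$, $Y_{a,K,b}(\mathbf{d})$ is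 the probability that it contains both $K\cup\{a\}$ and $K\cup\{b\}$ when $a\neq b$, and $Y_{a,K,a}(\mathbf{d})=0$. Identities are asserted whenever all quantities in them are defined. For $A,B\in\binom V{k-1}$, the $A$-consistent ordering of $(A,B)$ is the ordering $(a_1,\dots,a_{k-1})$ of $A$ and $(b_1,\dots,b_{k-1})$ of $B$ such that $a_1<\dots<a_{k-1}$, $b_i=a_i$ whenever $b_i\in A$, and the elements $b_i\notin A$ appear in increasing order of $i$. Then $R_{B,A}(\mathbf{d})=\prod_{j=1}^{k-1}R_{b_ja_j}\big(\mathbf{d}-\mathbf{e}_{\{b_1,\dots,b_{j-1},a_{j+1},\dots,a_{k-1}\}}\big)$. *)

(* Defs.v *)
From mathcomp Require Import all_boot all_order all_algebra.
Set Implicit Arguments. Unset Strict Implicit. Unset Printing Implicit Defensive.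
Import Order.TTheory GRing.Theory Num.Theory.
Local Open Scope ring_scope.

Section KGraphs.
Variables (n k : nat).

Definition kgraph (G : {set {set 'I_n}}) : bool := [forall e in G, #|e| == k].

Definition deg (G : {set {set 'I_n}}) (a : 'I_n) : nat := #|[set e in G | a \in e]|.

Definition has_degs (G : {set {set 'I_n}}) (d : 'I_n -> int) : bool :=
  [forall a, (deg G a)%:Z == d a].

Definition kgraphs (d : 'I_n -> int) : {set {set {set 'I_n}}} :=
  [set G | kgraph G && has_degs G d].

Definition Ncount (d : 'I_n -> int) : nat := #|kgraphs d|.

Definition kgraphical (d : 'I_n -> int) : bool := (0 < Ncount d)%N.

(* d - e_S  (e_S = sum of standard basis vectors of S); e_a = e_{[set a]} *)
Definition dminus (d : 'I_n -> int) (S : {set 'I_n}) : 'I_n -> int :=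
  fun x => d x - (x \in S)%:Z.

Definition Rab (d : 'I_n -> int) (a b : 'I_n) : rat :=
  (Ncount (dminus d [set a]))%:R / (Ncount (dminus d [set b]))%:R.

Definition Pedge (d : 'I_n -> int) (S : {set 'I_n}) : rat :=
  #|[set G in kgraphs d | S \in G]|%:R / (Ncount d)%:R.

Definition Ypair (d : 'I_n -> int) (a : 'I_n) (K : {set 'I_n}) (b : 'I_n) : rat :=
  if a == b then 0 else
  #|[set G in kgraphs d | (a |: K \in G) && (b |: K \in G)]|%:R / (Ncount d)%:R.

(* B(i,j,d') of part (a), relative to the pair a,b and the sequence d *)
Definition Bq (d : 'I_n -> int) (a b i j : 'I_n) (d' : 'I_n -> int) : rat :=
  ((d i)%:~R)^-1 *
  (\sum_(K : {set 'I_n} | (K \subset ~: [set a; b]) && (#|K| == (k - 2)%N))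
      Pedge d' (i |: (j |: K))
   + \sum_(K : {set 'I_n} | (K \subset ~: [set a; b]) && (#|K| == (k - 1)%N))
      Ypair d' i K j).

Definition sort_ord (s : seq 'I_n) : seq 'I_n :=
  sort (fun x y : 'I_n => (nat_of_ord x <= nat_of_ord y)%N) s.

Definition aord (A : {set 'I_n}) : seq 'I_n := sort_ord (enum A).

Fixpoint fill (B : {set 'I_n}) (as_ news : seq 'I_n) : seq 'I_n :=
  match as_ with
  | [::] => [::]
  | a :: as' =>
      if a \in B then a :: fill B as' news
      else match news with
           | [::] => a :: fill B as' [::]
           | b :: news' => b :: fill B as' news'
           end
  end.

Definition bord (A B : {set 'I_n}) : seq 'I_n :=
  fill B (aord A) (sort_ord (enum (B :\: A))).

Definition cset (A B : {set 'I_n}) (j : nat) : {set 'I_n} :=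
  [set x in take j (bord A B) ++ drop j (aord A)].

(* R_{B,A}(d) = prod_{j=1}^{k-1} R_{b_j a_j}(d - e_{b_1..b_{j-1},a_{j+1}..a_{k-1}})
   (0-based index p.1 = j-1) *)
Definition RBA (d : 'I_n -> int) (B A : {set 'I_n}) : rat :=
  \prod_(p <- zip (iota 0 (size (aord A))) (zip (bord A B) (aord A)))
     Rab (dminus d [set x in take p.1 (bord A B) ++ drop p.1.+1 (aord A)])
         p.2.1 p.2.2.

End KGraphs.

(* Main.v *)
Require Import Defs.
From mathcomp Require Import all_boot all_order all_algebra.
From mathcomp Require Import zify ring lra.
Set Implicit Arguments. Unset Strict Implicit. Unset Printing Implicit Defensive.
Import Order.TTheory GRing.Theory Num.Theory.

Local Open Scope ring_scope.

Section Basic.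
Variables (n k : nat).
Implicit Types (G : {set {set 'I_n}}) (d : 'I_n -> int) (S : {set 'I_n}).

Lemma has_degsP G d : reflect (forall a, (deg G a)%:Z = d a) (has_degs G d).
Proof. by apply: (iffP forallP) => H a; [apply/eqP/H | apply/eqP/H]. Qed.

Lemma kgraphP G : reflect (forall e, e \in G -> #|e| = k) (kgraph k G).
Proof. by apply: (iffP forall_inP) => H e /H; move/eqP. Qed.

Lemma in_kgraphs G d : (G \in kgraphs k d) = kgraph k G && has_degs G d.
Proof. by rewrite inE. Qed.

Lemma Ncount_ext d1 d2 : d1 =1 d2 -> Ncount k d1 = Ncount k d2.
Proof.
move=> E; rewrite /Ncount; apply: eq_card => G; rewrite !inE.
congr (_ && _); apply/has_degsP/has_degsP => H a; by rewrite H ?E.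
Qed.

Lemma deg_add G S x : S \notin G -> deg (S |: G) x = (deg G x + (x \in S))%N.
Proof.
move=> SG; rewrite /deg; case: (boolP (x \in S)) => xS.
  have -> : [set e in S |: G | x \in e] = S |: [set e in G | x \in e].
    apply/setP => e; rewrite !inE; case: (eqVneq e S) => [->|] //=; by rewrite ?xS.
  by rewrite cardsU1 inE (negbTE SG) /= addnC.
have -> : [set e in S |: G | x \in e] = [set e in G | x \in e].
  apply/setP => e; rewrite !inE; case: (eqVneq e S) => [->|] //=; by rewrite (negbTE xS) andbF.
by rewrite addn0.
Qed.

Lemma kgraph_add G S : #|S| = k -> kgraph k G -> kgraph k (S |: G).
Proof.
move=> hS /kgraphP H; apply/kgraphP => e; rewrite !inE; case/orP => [/eqP ->|/H] //.
Qed.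

Lemma kgraph_sub G S : kgraph k G -> kgraph k (G :\ S).
Proof. by move=> /kgraphP H; apply/kgraphP => e; rewrite inE => /andP[_ /H]. Qed.

Lemma card_remove d S (Q : pred {set {set 'I_n}}) : #|S| = k ->
  #|[set G in kgraphs k d | (S \in G) && Q G]| =
  #|[set G in kgraphs k (dminus d S) | (S \notin G) && Q (S |: G)]|.
Proof.
move=> hS.
have inj : {in [set G in kgraphs k (dminus d S) | (S \notin G) && Q (S |: G)] &,
              injective (fun G => S |: G)}.
  move=> G1 G2; rewrite !inE => /andP[_ /andP[h1 _]] /andP[_ /andP[h2 _]] E.
  by rewrite -(setU1K h1) -(setU1K h2) E.
rewrite -(card_in_imset inj); apply: eq_card => G; apply/idP/imsetP.
  rewrite !inE => /andP[/andP[kG /has_degsP dG] /andP[SG QG]].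
  exists (G :\ S); last by rewrite setD1K.
  rewrite !inE setD1K // QG eqxx /= andbT kgraph_sub //=.
  apply/has_degsP => x.
  have E : deg G x = (deg (G :\ S) x + (x \in S))%N.
    by rewrite -{1}(setD1K SG) deg_add // !inE eqxx.
  by rewrite /dminus -(dG x) E PoszD addrK.
move=> [G' ]; rewrite !inE => /andP[/andP[kG /has_degsP dG] /andP[SG QG]] ->.
rewrite QG setU11 /= andbT kgraph_add //=; apply/has_degsP => x.
by rewrite deg_add // PoszD dG /dminus subrK.
Qed.

Lemma card_split (T : finType) (A : {set T}) (p : pred T) :
  (#|[set x in A | p x]| + #|[set x in A | ~~ p x]|)%N = #|A|.
Proof.
rewrite -(cardsID [set x | p x] A); congr (_ + _)%N; apply: eq_card => x;
by rewrite !inE andbC.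
Qed.

End Basic.

Local Open Scope ring_scope.

Section PartC.
Variables (n k : nat).
Implicit Types (G : {set {set 'I_n}}) (d : 'I_n -> int) (S : {set 'I_n}).

Lemma card_split2 (T : finType) (A : {set T}) (p q : pred T) :
  (#|[set x in A | p x && q x]| + #|[set x in A | ~~ p x && q x]|)%N =
  #|[set x in A | q x]|.
Proof.
rewrite -(card_split [set x in A | q x] p); congr (_ + _)%N; apply: eq_card => x;
by rewrite !inE; case: (x \in A); case: (p x); case: (q x).
Qed.

Lemma card_remove1 d S : #|S| = k ->
  #|[set G in kgraphs k d | S \in G]| =
  #|[set G in kgraphs k (dminus d S) | S \notin G]|.
Proof.
move=> hS; have := card_remove d predT hS.
have -> : [set G in kgraphs k d | (S \in G) && predT G] = [set G in kgraphs k d | S \in G].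
  by apply/setP => G; rewrite !inE andbT.
have -> : [set G in kgraphs k (dminus d S) | (S \notin G) && predT (S |: G)] =
          [set G in kgraphs k (dminus d S) | S \notin G].
  by apply/setP => G; rewrite !inE andbT.
by [].
Qed.

Lemma part_c (K : {set 'I_n}) (a b : 'I_n) d :
  (2 <= k)%N ->
  #|K| = (k - 1)%N -> a \notin K -> b \notin K -> a != b ->
  kgraphical k d -> kgraphical k (dminus d (a |: K)) ->
  Pedge k (dminus d (a |: K)) (a |: K) < 1 ->
  Ypair k d a K b =
    Pedge k d (a |: K) / (1 - Pedge k (dminus d (a |: K)) (a |: K)) *
    (Pedge k (dminus d (a |: K)) (b |: K) - Ypair k (dminus d (a |: K)) a K b).
Proof.
move=> k2 hK aK bK ab gd gd' hP.
set S := a |: K; set T := b |: K; set d' := dminus d S.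
have hS : #|S| = k by rewrite /S cardsU1 aK hK; lia.
have TS : T != S.
  apply/negP => /eqP E; have : a \in T by rewrite E /S setU11.
  by rewrite /T !inE (negbTE aK) orbF (negbTE ab).
rewrite /Ypair (negbTE ab) /Pedge -/S -/T -/d'.
set N := Ncount k d; set N' := Ncount k d'.
set c := #|[set G in kgraphs k d' | S \in G]|.
set m := #|[set G in kgraphs k d' | S \notin G]|.
have hN' : (c + m)%N = N' by rewrite /c /m card_split.
have E1 : #|[set G in kgraphs k d | S \in G]| = m by rewrite card_remove1.
set y := #|[set G in kgraphs k d' | (S \notin G) && (T \in G)]|.
set z := #|[set G in kgraphs k d' | (S \in G) && (T \in G)]|.
set t := #|[set G in kgraphs k d' | T \in G]|.
have hyz : (z + y)%N = t by rewrite /y /z /t card_split2.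
have E2 : #|[set G in kgraphs k d | (S \in G) && (T \in G)]| = y.
  rewrite (card_remove d (fun G => T \in G) hS) /y; apply: eq_card => G.
  by rewrite !inE (negbTE TS).
rewrite E1 E2 -hyz -hN'.
have N0 : (N%:R : rat) != 0 by rewrite pnatr_eq0 -lt0n.
have Np0 : ((c + m)%N%:R : rat) != 0 by rewrite hN' pnatr_eq0 -lt0n.
have m0 : (m%:R : rat) != 0.
  apply/eqP => m0; move: hP; rewrite /Pedge -/S -/d' -/c -/N' -hN'.
  rewrite natrD m0 addr0 divff ?ltxx //; by move: Np0; rewrite natrD m0 addr0.
rewrite !natrD; rewrite natrD in Np0; field.
by rewrite Np0 N0 andbT (addrC (c%:R)) addrK m0.
Qed.

End PartC.

Local Open Scope ring_scope.

Lemma dcount (T U : finType) (X : {set T}) (P : pred U) (R : T -> U -> bool) :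
  (\sum_(x in X) #|[set y | P y && R x y]| = \sum_(y | P y) #|[set x in X | R x y]|)%N.
Proof.
transitivity (\sum_(x in X) \sum_(y | P y) (R x y : nat))%N.
  apply: eq_bigr => x _; rewrite -sum1dep_card big_mkcondr.
  by apply: eq_bigr => y _; case: (R x y).
rewrite exchange_big; apply: eq_bigr => y _.
rewrite -sum1dep_card big_mkcondr; by apply: eq_bigr => x _; case: (R x y).
Qed.

Section PartA.
Variables (n k : nat).
Implicit Types (G : {set {set 'I_n}}) (d : 'I_n -> int) (S : {set 'I_n}).

Lemma setDUK' (U e : {set 'I_n}) : U \subset e -> U :|: (e :\: U) = e.
Proof.
move=> Ue; apply/setP => x; rewrite !inE; case: (boolP (x \in U)) => //= xU.
by rewrite (subsetP Ue x xU).
Qed.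

Lemma edgesK G (U T : {set 'I_n}) : kgraph k G -> [disjoint U & T] ->
  #|[set e in G | (U \subset e) && (e \subset ~: T)]| =
  #|[set K : {set 'I_n} | [&& K \subset ~: (U :|: T), #|K| == (k - #|U|)%N & U :|: K \in G]]|.
Proof.
move=> /kgraphP kG dUT.
have inj : {in [set K : {set 'I_n} | [&& K \subset ~: (U :|: T), #|K| == (k - #|U|)%N & U :|: K \in G]] &,
             injective (fun K => U :|: K)}.
  move=> K1 K2; rewrite !inE => /andP[s1 _] /andP[s2 _] E; apply/setP => x.
  have := congr1 (fun A : {set 'I_n} => x \in A) E; rewrite /= !inE.
  case xU: (x \in U) => //= _.
  move/subsetP: s1 => /(_ x); move/subsetP: s2 => /(_ x); rewrite !inE xU /=.
  by case: (x \in K1); case: (x \in K2) => // h1 h2; first [by have := h1 isT | by have := h2 isT].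
rewrite -(card_in_imset inj); apply: eq_card => e; apply/idP/imsetP.
  rewrite !inE => /andP[eG /andP[Ue eT]].
  exists (e :\: U); last by rewrite setDUK'.
  rewrite !inE setDUK' // eG andbT; apply/andP; split.
    apply/subsetP => x; rewrite !inE => /andP[xU xe]; rewrite (negbTE xU) /=.
    by move/subsetP: eT => /(_ x xe); rewrite !inE.
  by rewrite cardsD (setIidPr Ue) (kG e eG).
move=> [K]; rewrite !inE => /and3P[sK _ UK] ->; rewrite UK subsetUl /=.
apply/subsetP => x; rewrite !inE => /orP[xU|xK].
  by rewrite (disjointFr dUT xU).
by move/subsetP: sK => /(_ x xK); rewrite !inE negb_or => /andP[].
Qed.

Lemma subC1 (e : {set 'I_n}) b : (e \subset ~: [set b]) = (b \notin e).
Proof.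
apply/subsetP/idP => [H|H x xe]; last by rewrite !inE; apply: contraNneq H => <-.
by apply/negP => /H; rewrite !inE eqxx.
Qed.

Lemma switch d (a b : 'I_n) (K : {set 'I_n}) : (1 <= k)%N -> a != b -> a \notin K -> b \notin K ->
  #|K| = (k - 1)%N ->
  (#|[set G in kgraphs k (dminus d [set b]) | (b |: K \notin G) && (a |: K \in G)]| <=
   #|[set G in kgraphs k (dminus d [set a]) | (a |: K \notin G) && (b |: K \in G)]|)%N.
Proof.
move=> k1 ab aK bK hK.
have haK : #|a |: K| = k by rewrite cardsU1 aK hK; lia.
have hbK : #|b |: K| = k by rewrite cardsU1 bK hK; lia.
have ne : a |: K != b |: K.
  apply/negP => /eqP E; have : a \in b |: K by rewrite -E setU11.
  by rewrite !inE (negbTE aK) orbF (negbTE ab).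
set phi := fun G => (b |: K) |: (G :\ (a |: K)).
have inj : {in [set G in kgraphs k (dminus d [set b]) | (b |: K \notin G) && (a |: K \in G)] &,
             injective phi}.
  move=> G1 G2; rewrite !inE => /andP[_ /andP[b1 a1]] /andP[_ /andP[b2 a2]] E.
  have h1 : b |: K \notin G1 :\ (a |: K) by rewrite !inE negb_and b1 orbT.
  have h2 : b |: K \notin G2 :\ (a |: K) by rewrite !inE negb_and b2 orbT.
  have E' : G1 :\ (a |: K) = G2 :\ (a |: K).
    by have := congr1 (fun A => A :\ (b |: K)) E; rewrite /phi /= !setU1K.
  by rewrite -(setD1K a1) -(setD1K a2) E'.
rewrite -(card_in_imset inj); apply: subset_leq_card; apply/subsetP => y /imsetP[G].
rewrite !inE => /andP[/andP[kG /has_degsP dG] /andP[bG aG]] -> {y}.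
have h1 : b |: K \notin G :\ (a |: K) by rewrite !inE negb_and bG orbT.
rewrite /phi !inE !eqxx (negbTE ne) /= andbT.
rewrite kgraph_add ?kgraph_sub //=; apply/has_degsP => x.
have E : deg G x = (deg (G :\ (a |: K)) x + (x \in a |: K))%N.
  by rewrite -{1}(setD1K aG) deg_add // !inE eqxx.
rewrite deg_add //; move: (dG x); rewrite E /dminus !inE => {E}.
case: (eqVneq x a) => [->|xa].
  rewrite ?eqxx (negbTE ab) ?(negbTE aK) /=; lia.
case: (eqVneq x b) => [->|xb] /=.
  rewrite (negbTE bK) /=; lia.
case: (x \in K) => /=; lia.
Qed.

End PartA.

Local Open Scope ring_scope.

Section PartA2.
Variables (n k : nat).
Implicit Types (G : {set {set 'I_n}}) (d : 'I_n -> int) (S : {set 'I_n}).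

Definition fsw d (a b : 'I_n) (K : {set 'I_n}) :=
  #|[set G in kgraphs k (dminus d [set b]) | (b |: K \notin G) && (a |: K \in G)]|.

Lemma natz_rat (m : nat) : (m%:Z)%:~R = m%:R :> rat.
Proof. by []. Qed.

Lemma sum_side d (a b : 'I_n) : (2 <= k)%N -> a != b -> 0 < d a ->
  kgraphical k (dminus d [set b]) ->
  ((\sum_(K : {set 'I_n} | (K \subset ~: [set a; b]) && (#|K| == (k - 1)%N)) fsw d a b K)%:R : rat)
  = (Ncount k (dminus d [set b]))%:R * (d a)%:~R * (1 - Bq k d a b a b (dminus d [set b])).
Proof.
move=> k2 ab da gD.
set D1 := dminus d [set b]; set X := kgraphs k D1.
pose dom1 := fun K : {set 'I_n} => (K \subset ~: [set a; b]) && (#|K| == (k - 1)%N).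
pose dom2 := fun K : {set 'I_n} => (K \subset ~: [set a; b]) && (#|K| == (k - 2)%N).
pose y := fun K : {set 'I_n} => #|[set G in X | (a |: K \in G) && (b |: K \in G)]|.
pose c := fun K : {set 'I_n} => #|[set G in X | a |: K \in G]|.
pose p := fun K : {set 'I_n} => #|[set G in X | a |: (b |: K) \in G]|.
have E1 : (\sum_(K | dom1 K) fsw d a b K + \sum_(K | dom1 K) y K)%N = (\sum_(K | dom1 K) c K)%N.
  rewrite -big_split; apply: eq_bigr => K _ /=.
  rewrite /fsw /y /c -/D1 -/X -(card_split2 X (fun G => b |: K \in G) (fun G => a |: K \in G)) addnC.
  congr (_ + _)%N; apply: eq_card => G; rewrite !inE; congr (_ && _); by rewrite andbC.
have E2 : (\sum_(G in X) deg G a)%N = (\sum_(K | dom2 K) p K + \sum_(K | dom1 K) c K)%N.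
  transitivity (\sum_(G in X)
     (#|[set K : {set 'I_n} | dom2 K && (a |: (b |: K) \in G)]| +
      #|[set K : {set 'I_n} | dom1 K && (a |: K \in G)]|))%N.
    apply: eq_bigr => G; rewrite inE => /andP[kG _].
    rewrite /deg -(card_split2 G (fun e => b \in e) (fun e => a \in e)); congr (_ + _)%N.
      transitivity #|[set e in G | ([set a; b] \subset e) && (e \subset ~: set0)]|.
        apply: eq_card => e; rewrite !inE setC0 subsetT andbT subUset !sub1set.
        by congr (_ && _); rewrite andbC.
      rewrite (edgesK kG); last by rewrite disjoints_subset setC0 subsetT.
      rewrite setU0 cards2 ab.
      apply: eq_card => K; rewrite !inE /dom2 -andbA -setUA //.
    transitivity #|[set e in G | ([set a] \subset e) && (e \subset ~: [set b])]|.
      apply: eq_card => e; rewrite !inE sub1set subC1.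
      by case: (e \in G); case: (a \in e); case: (b \in e).
    rewrite (edgesK kG); last by rewrite disjoints1 inE.
    rewrite cards1; apply: eq_card => K; rewrite !inE /dom1 -andbA //.
  rewrite big_split /=; congr (_ + _)%N.
    rewrite (dcount X dom2 (fun G K => a |: (b |: K) \in G)); by [].
  rewrite (dcount X dom1 (fun G K => a |: K \in G)); by [].
have E3 : ((\sum_(G in X) deg G a)%N%:R : rat) = (Ncount k D1)%:R * (d a)%:~R.
  rewrite natr_sum (eq_bigr (fun _ => (d a)%:~R)); last first.
    move=> G; rewrite inE => /andP[_ /has_degsP dG].
    by rewrite -natz_rat dG /D1 /dminus inE (negbTE ab) subr0.
  by rewrite sumr_const mulr_natl.
rewrite /Bq -/D1.
have -> : \sum_(K : {set 'I_n} | (K \subset ~: [set a; b]) && (#|K| == (k - 2)%N)) Pedge k D1 (a |: (b |: K))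
   = (\sum_(K | dom2 K) p K)%N%:R / (Ncount k D1)%:R.
  by rewrite natr_sum mulr_suml.
have -> : \sum_(K : {set 'I_n} | (K \subset ~: [set a; b]) && (#|K| == (k - 1)%N)) Ypair k D1 a K b
   = (\sum_(K | dom1 K) y K)%N%:R / (Ncount k D1)%:R.
  rewrite natr_sum mulr_suml; apply: eq_bigr => K _; by rewrite /Ypair (negbTE ab).
have N0 : ((Ncount k D1)%:R : rat) != 0 by rewrite pnatr_eq0 -lt0n.
have dA0 : ((d a)%:~R : rat) != 0 by rewrite intr_eq0; apply: lt0r_neq0.
move: E3; rewrite E2 -E1 !natrD => E3.
have -> : ((\sum_(K : {set 'I_n} | (K \subset ~: [set a; b]) && (#|K| == (k - 1)%N)) fsw d a b K)%:R : rat)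
  = (Ncount k D1)%:R * (d a)%:~R - (\sum_(K | dom2 K) p K)%N%:R - (\sum_(K | dom1 K) y K)%N%:R.
  by rewrite -E3; rewrite /dom1; ring.
by field; rewrite N0 dA0.
Qed.


Lemma da_pos d (a : 'I_n) : kgraphical k (dminus d [set a]) -> 0 < d a.
Proof.
move=> /card_gt0P [G]; rewrite inE => /andP[_ /has_degsP /(_ a)].
rewrite /dminus inE eqxx => E.
have : 0 <= d a - 1 by rewrite -E.
rewrite subr_ge0 => h; apply: lt_le_trans h; exact: ltr01.
Qed.

Lemma part_a d (a b : 'I_n) : (2 <= k)%N ->
  kgraphical k (dminus d [set a]) -> kgraphical k (dminus d [set b]) ->
  Bq k d a b b a (dminus d [set a]) < 1 ->
  Rab k d a b =
    (d a)%:~R / (d b)%:~R *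
    ((1 - Bq k d a b a b (dminus d [set b])) /
     (1 - Bq k d a b b a (dminus d [set a]))).
Proof.
move=> k2 ga gb hB.
have da := da_pos ga; have db := da_pos gb.
have dA0 : ((d a)%:~R : rat) != 0 by rewrite intr_eq0; apply: lt0r_neq0.
have dB0 : ((d b)%:~R : rat) != 0 by rewrite intr_eq0; apply: lt0r_neq0.
have B0 : 1 - Bq k d a b b a (dminus d [set a]) != 0.
  by rewrite subr_eq0 eq_sym (lt_eqF hB).
case: (eqVneq a b) => [e|ab].
  subst b; rewrite /Rab; have N0 : ((Ncount k (dminus d [set a]))%:R : rat) != 0 by rewrite pnatr_eq0 -lt0n.
  by field; rewrite N0 dA0 B0.
have S1 := sum_side k2 ab da gb.
have ba : b != a by rewrite eq_sym.
have S2 := sum_side k2 ba db ga.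
have BS : forall i j d', Bq k d b a i j d' = Bq k d a b i j d'.
  by move=> i j d'; rewrite /Bq (setUC [set b] [set a]).
rewrite BS in S2.
have ES : (\sum_(K : {set 'I_n} | (K \subset ~: [set a; b]) && (#|K| == (k - 1)%N)) fsw d a b K =
           \sum_(K : {set 'I_n} | (K \subset ~: [set b; a]) && (#|K| == (k - 1)%N)) fsw d b a K)%N.
  rewrite (setUC [set b] [set a]); apply: eq_bigr => K /andP[sK /eqP hK].
  have aK : a \notin K by apply/negP => /(subsetP sK); rewrite !inE eqxx.
  have bK : b \notin K by apply/negP => /(subsetP sK); rewrite !inE eqxx orbT.
  apply/eqP; rewrite eqn_leq /fsw; apply/andP; split; apply: switch => //; try lia.
rewrite ES S2 in S1.
have N1 : ((Ncount k (dminus d [set b]))%:R : rat) != 0 by rewrite pnatr_eq0 -lt0n.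
rewrite /Rab.
have -> : ((Ncount k (dminus d [set a]))%:R : rat) =
   (Ncount k (dminus d [set b]))%:R * (d a)%:~R * (1 - Bq k d a b a b (dminus d [set b]))
   / ((d b)%:~R * (1 - Bq k d a b b a (dminus d [set a]))).
  rewrite -S1; field; by rewrite dB0 B0.
by field; rewrite N1 dB0 B0.
Qed.

End PartA2.

Section Fill.
Variables (n : nat) (B : {set 'I_n}).

Lemma size_fill (s news : seq 'I_n) : size (fill B s news) = size s.
Proof.
elim: s news => [|a s IH] news //=.
case: (a \in B) => /=; first by rewrite IH.
by case: news => [|b news] /=; rewrite IH.
Qed.

Lemma fill_mem (s news : seq 'I_n) x : x \in fill B s news -> (x \in s) || (x \in news).
Proof.
elim: s news => [|a s IH] news //=.
case: (a \in B) => /=.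
  rewrite !inE => /orP[->//|/IH]; by case/orP => ->; rewrite ?orbT.
case: news => [|b news] /=; rewrite !inE.
  by case/orP => [->//|/IH]; rewrite orbF => ->; rewrite orbT.
case/orP => [->|/IH]; first by rewrite orbT.
by case/orP => ->; rewrite ?orbT.
Qed.

Lemma fill_uniq (s news : seq 'I_n) : uniq s -> uniq news ->
  (forall x, x \in s -> x \notin news) -> uniq (fill B s news).
Proof.
elim: s news => [|a s IH] news //= /andP[as_ us] un dis.
have dis' : forall x, x \in s -> x \notin news.
  by move=> x xs; apply: dis; rewrite inE xs orbT.
case: (a \in B) => /=.
  rewrite IH // andbT; apply/negP => /fill_mem /orP[|]; first by rewrite (negbTE as_).
  by apply/negP; apply: dis; rewrite inE eqxx.
case: news un dis dis' => [|b news] /= un dis dis'.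
  rewrite IH // andbT; apply/negP => /fill_mem; by rewrite (negbTE as_).
move: un => /andP[bn un].
rewrite IH //; last first.
  move=> x xs; move: (dis' x xs); rewrite inE negb_or => /andP[].
  by [].
rewrite andbT; apply/negP => /fill_mem /orP[bs|]; last by rewrite (negbTE bn).
by move: (dis' b bs); rewrite inE eqxx.
Qed.

Lemma fill_nth (s news : seq 'I_n) x0 i : (i < size s)%N ->
  nth x0 (fill B s news) i = nth x0 s i \/ nth x0 (fill B s news) i \in news.
Proof.
elim: s news i => [|a s IH] news i //= hi.
case: (a \in B) => /=.
  case: i hi => [|i] hi /=; first by left.
  by apply: IH.
case: news => [|b news] /=.
  case: i hi => [|i] hi /=; first by left.
  by apply: IH.
case: i hi => [|i] hi /=; first by right; rewrite inE eqxx.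
case: (IH news i hi) => [->|h]; first by left.
by right; rewrite inE h orbT.
Qed.

Lemma fill_inB (s news : seq 'I_n) : (forall x, x \in news -> x \in B) ->
  (count (fun x => x \notin B) s <= size news)%N ->
  forall x, x \in fill B s news -> x \in B.
Proof.
elim: s news => [|a s IH] news //= hnews.
case aB: (a \in B) => /= hc x.
  rewrite inE => /orP[/eqP ->//|]; exact: IH.
case: news hnews hc => [|b news] /= hnews hc; first by lia.
rewrite inE => /orP[/eqP ->|]; first by apply: hnews; rewrite inE eqxx.
apply: IH; last by move: hc; rewrite add1n ltnS.
by move=> y yn; apply: hnews; rewrite inE yn orbT.
Qed.

End Fill.

Lemma nth_notin_take (T : eqType) (x0 : T) (s : seq T) j :
  uniq s -> (j < size s)%N -> nth x0 s j \notin take j s.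
Proof.
move=> us hj; move: us; rewrite -{1}(cat_take_drop j s) cat_uniq => /and3P[_ hh _].
apply/negP => hin; move/negP: hh; apply; apply/hasP; exists (nth x0 s j) => //.
by rewrite (drop_nth x0 hj) inE eqxx.
Qed.

Lemma nth_notin_drop (T : eqType) (x0 : T) (s : seq T) j :
  uniq s -> (j < size s)%N -> nth x0 s j \notin drop j.+1 s.
Proof.
move=> us hj; move: us; rewrite -{1}(cat_take_drop j.+1 s) cat_uniq => /and3P[_ hh _].
apply/negP => hin; move/negP: hh; apply; apply/hasP; exists (nth x0 s j) => //.
by rewrite (take_nth x0 hj) mem_rcons inE eqxx.
Qed.

Section Ord.
Variables (n : nat) (A B : {set 'I_n}).
Hypothesis hAB : #|A| = #|B|.

Lemma aord_uniq : uniq (aord A).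
Proof. by rewrite /aord /sort_ord sort_uniq enum_uniq. Qed.
Lemma mem_aord x : (x \in aord A) = (x \in A).
Proof. by rewrite /aord /sort_ord mem_sort mem_enum. Qed.
Lemma size_aord : size (aord A) = #|A|.
Proof. by rewrite /aord /sort_ord size_sort cardE. Qed.

Let nw := sort_ord (enum (B :\: A)).
Lemma mem_nw x : (x \in nw) = (x \in B :\: A).
Proof. by rewrite /nw /sort_ord mem_sort mem_enum. Qed.

Lemma size_bord : size (bord A B) = #|A|.
Proof. by rewrite /bord size_fill size_aord. Qed.

Lemma bord_uniq : uniq (bord A B).
Proof.
apply: fill_uniq; first exact: aord_uniq.
  by rewrite /sort_ord sort_uniq enum_uniq.
by move=> x; rewrite mem_aord -/nw mem_nw !inE => ->.
Qed.

Lemma bord_nth_in x0 i : (i < #|A|)%N -> nth x0 (bord A B) i \in A ->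
  nth x0 (bord A B) i = nth x0 (aord A) i.
Proof.
move=> hi hin; case: (@fill_nth n B (aord A) nw x0 i) => //.
  by rewrite size_aord.
by rewrite -/nw -/(bord A B) mem_nw !inE hin.
Qed.

Lemma count_cond : (count (fun x => x \notin B) (aord A) <= size nw)%N.
Proof.
rewrite -size_filter -(card_uniqP (filter_uniq _ aord_uniq)).
rewrite /nw /sort_ord size_sort -cardE.
have -> : #|[seq x <- aord A | x \notin B]| = #|A :\: B|.
  by apply: eq_card => x; rewrite mem_filter mem_aord !inE.
by rewrite !cardsD hAB setIC.
Qed.

Lemma bord_inB x : x \in bord A B -> x \in B.
Proof.
apply: fill_inB; last exact: count_cond.
by move=> y; rewrite mem_nw inE => /andP[].
Qed.

Lemma set_bord : [set x in bord A B] = B.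
Proof.
apply/eqP; rewrite eqEcard; apply/andP; split.
  by apply/subsetP => x; rewrite inE; apply: bord_inB.
by rewrite cardsE (card_uniqP bord_uniq) size_bord hAB.
Qed.

Lemma set_aord : [set x in aord A] = A.
Proof. by apply/setP => x; rewrite inE mem_aord. Qed.

End Ord.

Local Open Scope ring_scope.

Lemma telescope (f : nat -> rat) m : (forall j, (j <= m)%N -> f j != 0) ->
  \prod_(0 <= i < m) (f i.+1 / f i) = f m / f 0%N.
Proof.
elim: m => [|m IH] H; first by rewrite big_nil divff // H.
rewrite big_nat_recr //= IH; last by move=> j hj; apply: H; lia.
have h0 := H 0%N isT; have hm : f m != 0 by apply: H; lia.
by field; rewrite h0 hm.
Qed.

Section Step.
Variables (n : nat) (A B : {set 'I_n}).
Hypothesis hAB : #|A| = #|B|.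

Lemma step (x0 : 'I_n) (d' : 'I_n -> int) j : (j < #|A|)%N ->
  dminus (dminus d' [set x in take j (bord A B) ++ drop j.+1 (aord A)])
         [set nth x0 (bord A B) j] =1 dminus d' (cset A B j.+1) /\
  dminus (dminus d' [set x in take j (bord A B) ++ drop j.+1 (aord A)])
         [set nth x0 (aord A) j] =1 dminus d' (cset A B j).
Proof.
move=> hj.
have hjb : (j < size (bord A B))%N by rewrite size_bord.
have hja : (j < size (aord A))%N by rewrite size_aord.
set bs := bord A B; set as_ := aord A.
set b := nth x0 bs j; set a := nth x0 as_ j.
have hb1 : b \notin take j bs by apply: nth_notin_take => //; apply: bord_uniq.
have ha2 : a \notin drop j.+1 as_ by apply: nth_notin_drop => //; apply: aord_uniq.
have hb2 : b \notin drop j.+1 as_.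
  case: (boolP (b \in A)) => bA.
    by rewrite /b (@bord_nth_in n A B x0 j hj bA).
  by apply/negP => /mem_drop; rewrite /as_ mem_aord (negbTE bA).
have ha1 : a \notin take j bs.
  apply/negP => ain.
  have hi : (index a (take j bs) < j)%N.
    by rewrite -{2}(size_takel (ltnW hjb)) index_mem.
  have e1 : nth x0 bs (index a (take j bs)) = a by rewrite -(nth_take x0 hi) nth_index.
  have aA : a \in A by rewrite -mem_aord mem_nth.
  have := @bord_nth_in n A B x0 (index a (take j bs)) (ltn_trans hi hj).
  rewrite -/bs e1 => /(_ aA) /eqP; rewrite /a nth_uniq ?aord_uniq ?size_aord // -/a.
  - by move=> /eqP E; move: hi; rewrite -E ltnn.
  - exact: ltn_trans hi hj.
split=> x; rewrite /dminus /cset !inE.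
  rewrite -/bs -/as_ (take_nth x0 hjb) -/b !mem_cat mem_rcons inE.
  case: (eqVneq x b) => [->|xb] /=; first by rewrite (negbTE hb1) (negbTE hb2) /= subr0.
  by rewrite subr0.
rewrite -/bs -/as_ (drop_nth x0 hja) -/a !mem_cat inE.
case: (eqVneq x a) => [->|xa] /=; first by rewrite (negbTE ha1) (negbTE ha2) /= subr0.
by rewrite subr0.
Qed.

Lemma RBA_tel (x0 : 'I_n) k (d' : 'I_n -> int) :
  (forall j, (j <= #|A|)%N -> kgraphical k (dminus d' (cset A B j))) ->
  RBA k d' B A = (Ncount k (dminus d' B))%:R / (Ncount k (dminus d' A))%:R.
Proof.
move=> hg.
pose f := fun j => ((Ncount k (dminus d' (cset A B j)))%:R : rat).
rewrite /RBA (big_nth (0%N, (x0, x0))) size_zip size_iota size_zip size_bord size_aord !minnn.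
rewrite (@eq_big_nat _ _ _ 0 #|A| _ (fun i => f i.+1 / f i)); last first.
  move=> i /andP[_ hi].
  rewrite nth_zip ?size_iota ?size_zip ?size_bord ?size_aord ?minnn //=.
  rewrite nth_iota // nth_zip ?size_bord ?size_aord //= add0n.
  case: (step x0 d' hi) => h1 h2.
  by rewrite /Rab (Ncount_ext k h1) (Ncount_ext k h2).
rewrite telescope; last by move=> j hj; rewrite /f pnatr_eq0 -lt0n; apply: hg.
rewrite /f /cset take_oversize ?size_bord // drop_oversize ?size_aord // cats0.
by rewrite set_bord // take0 drop0 set_aord.
Qed.

End Step.

Local Open Scope ring_scope.

Section PartB.
Variables (n k : nat).

Lemma dm_ext (d : 'I_n -> int) v (S : {set 'I_n}) : v \notin S ->
  dminus (dminus d [set v]) S =1 dminus d (v |: S).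
Proof.
move=> vS x; rewrite /dminus !inE.
case: (eqVneq x v) => [->|xv] /=; first by rewrite (negbTE vS) subr0.
by rewrite subr0.
Qed.

Lemma cset_last (A B : {set 'I_n}) : #|A| = #|B| -> cset A B #|A| = B.
Proof.
move=> hAB; rewrite /cset take_oversize ?size_bord // drop_oversize ?size_aord // cats0.
exact: set_bord.
Qed.

Lemma part_b (d : 'I_n -> int) (A : {set 'I_n}) (v : 'I_n) : (2 <= k)%N ->
      #|A| = (k - 1)%N -> v \notin A ->
      0 < Pedge k d (v |: A) ->
      (forall B : {set 'I_n}, B \subset ~: [set v] -> #|B| = (k - 1)%N ->
         forall j : nat, (j <= k - 1)%N ->
           kgraphical k (dminus (dminus d [set v]) (cset A B j))) ->
      Pedge k d (v |: A) =
        (d v)%:~R *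
        (\sum_(B : {set 'I_n} | (B \subset ~: [set v]) && (#|B| == (k - 1)%N))
            RBA k (dminus d [set v]) B A *
            ((1 - Pedge k (dminus d (v |: B)) (v |: B)) /
             (1 - Pedge k (dminus d (v |: A)) (v |: A))))^-1.
Proof.
move=> k2 hA vA hP hyp.
set N := Ncount k d.
pose c := fun B : {set 'I_n} => #|[set G in kgraphs k d | v |: B \in G]|.
pose m := fun B : {set 'I_n} => #|[set G in kgraphs k (dminus d (v |: B)) | v |: B \notin G]|.
pose c' := fun B : {set 'I_n} => #|[set G in kgraphs k (dminus d (v |: B)) | v |: B \in G]|.
pose NB := fun B : {set 'I_n} => Ncount k (dminus d (v |: B)).
have hNB : forall B, (c' B + m B)%N = NB B by move=> B; rewrite /c' /m card_split.
have hcm : forall B : {set 'I_n}, v \notin B -> #|B| = (k - 1)%N -> c B = m B.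
  move=> B vB hB; rewrite /c /m card_remove1 //; rewrite cardsU1 vB hB; lia.
have N0 : (N%:R : rat) != 0.
  apply/negP => /eqP N0; move: hP; by rewrite /Pedge -/N N0 invr0 mulr0 ltxx.
have mA0 : ((m A)%:R : rat) != 0.
  apply/negP => /eqP m0; move: hP; by rewrite /Pedge -/N -/(c A) hcm // m0 mul0r ltxx.
have NA0 : ((NB A)%:R : rat) != 0.
  by rewrite -hNB pnatr_eq0 addn_eq0 negb_and; move: mA0; rewrite pnatr_eq0 => ->; rewrite orbT.
have [G0 G0in] : exists G0, G0 \in [set G in kgraphs k d | v |: A \in G].
  apply/card_gt0P; rewrite lt0n; move: mA0; rewrite -(hcm A) // pnatr_eq0 //.
move: G0in; rewrite !inE => /andP[/andP[kG0 /has_degsP dG0] vAG0].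
set dv := deg G0 v.
have dvE : d v = dv%:Z by rewrite dG0.
have dv0 : (dv%:R : rat) != 0.
  rewrite pnatr_eq0 -lt0n /dv /deg; apply/card_gt0P; exists (v |: A).
  by rewrite !inE vAG0 eqxx.
have degE : forall G, G \in kgraphs k d -> deg G v = dv.
  move=> G; rewrite inE => /andP[_ /has_degsP dG].
  by apply/eqP; rewrite -eqz_nat dG dvE.
have DC : (\sum_(B : {set 'I_n} | (B \subset ~: [set v]) && (#|B| == (k - 1)%N)) m B)%N = (N * dv)%N.
  transitivity (\sum_(B : {set 'I_n} | (B \subset ~: [set v]) && (#|B| == (k - 1)%N)) c B)%N.
    apply: eq_bigr => B /andP[sB /eqP hB]; rewrite hcm //.
    by apply/negP => /(subsetP sB); rewrite !inE eqxx.
  rewrite -(dcount (kgraphs k d) (fun B : {set 'I_n} => (B \subset ~: [set v]) && (#|B| == (k - 1)%N))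
                   (fun G B => v |: B \in G)).
  rewrite (eq_bigr (fun _ => dv)); first by rewrite sum_nat_const.
  move=> G Gin; rewrite -(degE G Gin) /deg.
  move: Gin; rewrite inE => /andP[kG _].
  transitivity #|[set e in G | ([set v] \subset e) && (e \subset ~: set0)]|; last first.
    by apply: eq_card => e; rewrite !inE sub1set setC0 subsetT andbT.
  rewrite (edgesK kG); last by rewrite disjoints_subset setC0 subsetT.
  rewrite setU0 cards1; apply: eq_card => B; rewrite !inE; by rewrite andbA.
rewrite (eq_bigr (fun B => (m B)%:R / (m A)%:R)); last first.
  move=> B /andP[sB /eqP hB].
  have vB : v \notin B by apply/negP => /(subsetP sB); rewrite !inE eqxx.
  have hAB : #|A| = #|B| by rewrite hA hB.
  rewrite (@RBA_tel n A B hAB v k (dminus d [set v])); last first.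
    by move=> j hj; apply: hyp => //; rewrite -hA.
  rewrite (Ncount_ext k (dm_ext d vB)) (Ncount_ext k (dm_ext d vA)) -/(NB B) -/(NB A).
  have NB0 : ((NB B)%:R : rat) != 0.
    rewrite pnatr_eq0 -lt0n /NB -(Ncount_ext k (dm_ext d vB)).
    have := hyp B sB hB (k - 1)%N (leqnn _); rewrite -hA cset_last //.
  rewrite /Pedge -/(c' B) -/(c' A) -/(NB B) -/(NB A).
  move: NB0 NA0; rewrite -!hNB !natrD => NB0 NA0.
  by field; rewrite mA0 NA0 NB0.
have -> : \sum_(B : {set 'I_n} | (B \subset ~: [set v]) && (#|B| == (k - 1)%N)) (m B)%:R / (m A)%:R
   = (\sum_(B : {set 'I_n} | (B \subset ~: [set v]) && (#|B| == (k - 1)%N)) m B)%N%:R / (m A)%:R :> rat.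
  by rewrite natr_sum mulr_suml.
rewrite DC natrM dvE.
rewrite /Pedge -/N -/(c A) hcm //.
by field; rewrite N0 mA0 dv0.
Qed.

End PartB.

Local Open Scope ring_scope.

Theorem lemma3p2 (n k : nat) (d : 'I_n -> int) :
  (2 <= k <= n)%N ->
  (* (a) *)
  (forall a b : 'I_n,
      kgraphical k (dminus d [set a]) -> kgraphical k (dminus d [set b]) ->
      Bq k d a b b a (dminus d [set a]) < 1 ->
      Rab k d a b =
        (d a)%:~R / (d b)%:~R *
        ((1 - Bq k d a b a b (dminus d [set b])) /
         (1 - Bq k d a b b a (dminus d [set a]))))
  /\
  (* (b) *)
  (forall (A : {set 'I_n}) (v : 'I_n),
      #|A| = (k - 1)%N -> v \notin A ->
      0 < Pedge k d (v |: A) ->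
      (forall B : {set 'I_n}, B \subset ~: [set v] -> #|B| = (k - 1)%N ->
         forall j : nat, (j <= k - 1)%N ->
           kgraphical k (dminus (dminus d [set v]) (cset A B j))) ->
      Pedge k d (v |: A) =
        (d v)%:~R *
        (\sum_(B : {set 'I_n} | (B \subset ~: [set v]) && (#|B| == (k - 1)%N))
            RBA k (dminus d [set v]) B A *
            ((1 - Pedge k (dminus d (v |: B)) (v |: B)) /
             (1 - Pedge k (dminus d (v |: A)) (v |: A))))^-1)
  /\
  (* (c) *)
  (forall (K : {set 'I_n}) (a b : 'I_n),
      #|K| = (k - 1)%N -> a \notin K -> b \notin K -> a != b ->
      kgraphical k d -> kgraphical k (dminus d (a |: K)) ->
      Pedge k (dminus d (a |: K)) (a |: K) < 1 ->
      Ypair k d a K b =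
        Pedge k d (a |: K) / (1 - Pedge k (dminus d (a |: K)) (a |: K)) *
        (Pedge k (dminus d (a |: K)) (b |: K) - Ypair k (dminus d (a |: K)) a K b)).
Proof.
move=> /andP[k2 _]; split; [|split].
- by move=> a b; apply: part_a.
- by move=> A v; apply: part_b.
- by move=> K a b; apply: part_c.
Qed.
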